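(* For a hypergraph $H$ on a finite set $X$, let $\gamma(H)\in\mathrm{Bool}(X)$ be $\gamma(H)(A)=|\{Y\in E(H)\mid Y\subseteq A\}|$. Then: the map $H\mapsto\gamma(H)$ is injective; $\gamma(H)$ is rigid; for hypergraphs $G$ on $X$ and $H$ on $Y$ with $X\cap Y=\emptyset$, $\gamma(GH)=\gamma(G)\star_1\gamma(H)$, where $E(GH)=E(G)\sqcup E(H)$; for $X'\subseteq X$, $\gamma(H_{\mid X'})=\gamma(H)_{\mid X'}$ where $E(H_{\mid X'})=\{Y\in E(H)\mid Y\subseteq X'\}$; and $\gamma(H)$ is modular iff every hyperedge of $H$ has cardinality $1$.
   Context: A boolean function on a finite set $X$ is a map $f:\mathcal{P}(X)\to\mathbb{Z}$ with $f(\emptyset)=0$; $\mathrm{Bool}(X)$ is their set; $f_{\mid Y}$ is the restriction to $\mathcal{P}(Y)$. For disjoint $X,Y$, $(f\star_1g)(A)=f(A\cap X)+g(A\cap Y)$. $f$ is modular if $f(A)=\sum_{x\in A}f(\{x\})$ for all $A\subseteq X$. For nonempty $X$, $f$ is indecomposable if $f=f'\star_1f''$ with $f'\in\mathrm{Bool}(X\setminus Y)$, $f''\in\mathrm{Bool}(Y)$ forces $Y\in\{\emptyset,X\}$. Each $f$ decomposes uniquely as $f=\prod^{\star_1}_{Y}f_{\mid Y}$ over the classes $Y$ of an equivalence on $X$ with each $f_{\mid Y}$ indecomposable; these classes are the indecomposable components. An indecomposable $f$ is rigid if for all disjoint $A,B\subseteq X$ with $f(A\sqcup B)=f(A)+f(B)$,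 one has $f(A'\sqcup B')=f(A')+f(B')$ for all $A'\subseteq A$, $B'\subseteq B$; a general $f$ is rigid if $f_{\mid Y}$ is rigid for each indecomposable component $Y$. A hypergraph $H$ on $X$ is a set $E(H)$ of nonempty subsets of $X$ (hyperedges). *)

(* Defs.v *)
(* Subsets of a finite set X are modelled inside an ambient
   finType T: X : {set T}, subsets A : {set T} with A \subset X. *)
From HB Require Import structures.
From mathcomp Require Import all_boot all_order all_algebra.
Set Implicit Arguments. Unset Strict Implicit. Unset Printing Implicit Defensive.
Import Order.TTheory GRing.Theory Num.Theory.
Local Open Scope ring_scope.

Section BoolFun.
Variable T : finType.

(* A boolean function on X : a map P(X) -> Z sending the empty set to 0.
   It is represented by f : {set T} -> int, only its values on subsets of X
   matter. *)
Definition is_boolfun (X : {set T}) (f : {set T} -> int) : Prop := f set0 = 0.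

Definition bf_eq (X : {set T}) (f g : {set T} -> int) : Prop :=
  forall A : {set T}, A \subset X -> f A = g A.

Definition star1 (X Y : {set T}) (f g : {set T} -> int) : {set T} -> int :=
  fun A => f (A :&: X) + g (A :&: Y).

Definition modular (X : {set T}) (f : {set T} -> int) : Prop :=
  forall A : {set T}, A \subset X -> f A = \sum_(x in A) f [set x].

Definition indecomposable (X : {set T}) (f : {set T} -> int) : Prop :=
  X != set0 /\
  forall Y : {set T}, Y \subset X ->
    (exists f' f'' : {set T} -> int,
        is_boolfun (X :\: Y) f' /\ is_boolfun Y f'' /\
        bf_eq X f (star1 (X :\: Y) Y f' f'')) ->
    Y = set0 \/ Y = X.

Definition rigid_indec (X : {set T}) (f : {set T} -> int) : Prop :=
  forall A B : {set T}, A \subset X -> B \subset X -> [disjoint A & B] ->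
    f (A :|: B) = f A + f B ->
    forall A' B' : {set T}, A' \subset A -> B' \subset B ->
      f (A' :|: B') = f A' + f B'.

(* P is the partition of X into indecomposable components of f:
   f = prod^{*_1}_{Y in P} f_|Y with each f_|Y indecomposable *)
Definition indec_components (X : {set T}) (f : {set T} -> int)
    (P : {set {set T}}) : Prop :=
  partition P X /\
  (forall A : {set T}, A \subset X -> f A = \sum_(Y in P) f (A :&: Y)) /\
  (forall Y : {set T}, Y \in P -> indecomposable Y f).

Definition rigid (X : {set T}) (f : {set T} -> int) : Prop :=
  forall P : {set {set T}}, indec_components X f P ->
    forall Y : {set T}, Y \in P -> rigid_indec Y f.

Definition hypergraph (X : {set T}) (E : {set {set T}}) : Prop :=
  forall e : {set T}, e \in E -> e != set0 /\ e \subset X.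

Definition gamma (E : {set {set T}}) : {set T} -> int :=
  fun A => (#|[set e in E | e \subset A]|)%:Z.

Definition hrestrict (E : {set {set T}}) (X' : {set T}) : {set {set T}} :=
  [set e in E | e \subset X'].

End BoolFun.

(* Main.v *)
Require Import Defs.
From mathcomp Require Import all_boot all_order all_algebra.
Local Open Scope ring_scope.

Section Aux.
Variable T : finType.

Lemma cardsum (U : finType) (E : {set U}) (p : pred U) :
  #|[set e in E | p e]| = (\sum_(e in E) (p e : nat))%N.
Proof.
rewrite -sum1_card big_mkcond /= [RHS]big_mkcond /=.
apply: eq_bigr => e _; rewrite !inE; by case: (e \in E); case: (p e).
Qed.

Lemma Posz_sum (U : finType) (A : {set U}) (F : U -> nat) :
  Posz (\sum_(x in A) F x)%N = \sum_(x in A) Posz (F x).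
Proof. by rewrite (big_morph Posz PoszD (erefl (Posz 0))). Qed.

Lemma gammaS (E : {set {set T}}) A :
  gamma E A = Posz (\sum_(e in E) (e \subset A : nat))%N.
Proof. by rewrite /gamma cardsum. Qed.

Lemma inj_gamma (X : {set T}) (E1 E2 : {set {set T}}) :
  hypergraph X E1 -> hypergraph X E2 ->
  bf_eq X (gamma E1) (gamma E2) -> E1 = E2.
Proof.
move=> h1 h2 heq.
have key : forall n (e : {set T}), (#|e| <= n)%N -> e \subset X -> (e \in E1) = (e \in E2).
  elim=> [|n IH] e.
    rewrite leqn0 cards_eq0 => /eqP -> _.
    apply/idP/idP => [/h1|/h2] [] /eqP //.
  move=> hn heX.
  have hc : forall E : {set {set T}},
      #|[set e' in E | e' \subset e]| =
      ((e \in E) + #|[set e' in E | e' \proper e]|)%N.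
    move=> E; rewrite (cardsD1 e) !inE subxx andbT; congr (_ + _)%N.
    apply: eq_card => e'; rewrite !inE properEneq; by case: (e' \in E); case: (e' == e); case: (e' \subset e).
  have := heq e heX; rewrite /gamma => /eqP; rewrite eqz_nat hc hc.
  have -> : [set e' in E1 | e' \proper e] = [set e' in E2 | e' \proper e].
    apply/setP => e'; rewrite !inE.
    case hp: (e' \proper e); rewrite ?andbF ?andbT //.
    apply: IH; last by apply: subset_trans heX; apply: proper_sub.
    by rewrite -ltnS; apply: leq_trans hn; apply: proper_card.
  rewrite eqn_add2r; by case: (e \in E1); case: (e \in E2).
apply/setP => e; apply/idP/idP => he.
- by rewrite -(key #|e|) // (h1 _ he).2.
- by rewrite (key #|e|) // (h2 _ he).2.
Qed.

Lemma mixed_pt (A B e : {set T}) : [disjoint A & B] -> e != set0 ->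
  (e \subset A :|: B : nat) =
  ((e \subset A : nat) + (e \subset B : nat) +
   ((e \subset A :|: B) && ~~ (e \subset A) && ~~ (e \subset B) : nat))%N.
Proof.
move=> hd /set0Pn [x hx].
case hA: (e \subset A); case hB: (e \subset B) => /=.
- by have := disjointFr hd (subsetP hA x hx); rewrite (subsetP hB x hx).
- by rewrite (subset_trans hA (subsetUl _ _)).
- by rewrite (subset_trans hB (subsetUr _ _)).
- by rewrite andbT; case: (e \subset A :|: B).
Qed.

Lemma rigid_all (X : {set T}) (E : {set {set T}}) :
  hypergraph X E -> forall Y, rigid_indec Y (gamma E).
Proof.
move=> hE Y A B _ _ hd.
have hs : (\sum_(e in E) (e \subset A :|: B : nat) = \sum_(e in E) ((e \subset A : nat) + (e \subset B : nat) +
   ((e \subset A :|: B) && ~~ (e \subset A) && ~~ (e \subset B) : nat)))%N.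
  by apply: eq_bigr => e he; apply: mixed_pt => //; exact: (hE e he).1.
rewrite !gammaS -PoszD => /eqP; rewrite eqz_nat -big_split /= hs.
rewrite big_split /= -[X in _ == X]addn0 eqn_add2l sum_nat_eq0.
move=> /forall_inP hm A' B' hA' hB'.
rewrite !gammaS -PoszD -big_split /=; congr Posz.
apply: eq_bigr => e he.
have hd' : [disjoint A' & B'].
  exact: disjointW hA' hB' hd.
rewrite (mixed_pt _ _ _ hd' (hE e he).1).
suff -> : ((e \subset A' :|: B') && ~~ (e \subset A') && ~~ (e \subset B')) = false
  by rewrite addn0.
apply/negbTE; apply/negP => /andP [/andP [hU hnA] hnB].
have := hm e he; rewrite eqb0 !negb_and !negbK.
have hU' : e \subset A :|: B by apply: subset_trans hU _; apply: setUSS.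
rewrite hU' /= => /orP [hA|hB].
- apply: (negP hnA); apply/subsetP => x hx.
  have := subsetP hU x hx; rewrite inE => /orP [//|hxB].
  by have := disjointFr hd (subsetP hA x hx); rewrite (subsetP hB' x hxB).
- apply: (negP hnB); apply/subsetP => x hx.
  have := subsetP hU x hx; rewrite inE => /orP [hxA|//].
  by have := disjointFr hd (subsetP hA' x hxA); rewrite (subsetP hB x hx).
Qed.

Lemma gamma1 (X : {set T}) (E : {set {set T}}) x :
  hypergraph X E -> gamma E [set x] = Posz ([set x] \in E : nat).
Proof.
move=> hE; rewrite /gamma; congr Posz.
case h: ([set x] \in E) => /=.
- rewrite -(cards1 [set x]); apply: eq_card => e; rewrite !inE subset1.
  case he: (e \in E) => /=.
  + have := (hE e he).1; case: (e == set0); by rewrite ?orbF.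
  + by apply/esym/negbTE; apply: contraFN he => /eqP ->.
- rewrite -(cards0 {set T}); apply: eq_card => e; rewrite !inE subset1.
  case he: (e \in E) => //=.
  have := (hE e he).1; case: (e =P set0) => //= _ _.
  rewrite orbF; apply/negbTE/eqP => he'; by rewrite -he' he in h.
Qed.

Definition E1 (X : {set T}) (E : {set {set T}}) :=
  [set [set x] | x in [set x in X | [set x] \in E]].

Lemma E1_hyp X E : hypergraph X (E1 X E).
Proof.
move=> e /imsetP [x]; rewrite inE => /andP [hx _] ->.
by rewrite sub1set hx; split => //; apply/set0Pn; exists x; rewrite inE.
Qed.

Lemma E1_gamma X E : hypergraph X E ->
  forall A : {set T}, A \subset X -> gamma (E1 X E) A = \sum_(x in A) gamma E [set x].
Proof.
move=> hE A hA.
rewrite (eq_bigr _ (fun (x : T) _ => gamma1 X E x hE)) -Posz_sum /gamma; congr Posz.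
rewrite -cardsum.
have -> : [set e in E1 X E | e \subset A] = [set [set x] | x in [set x in A | [set x] \in E]].
  apply/setP => e; rewrite inE; apply/andP/imsetP.
  - move=> [/imsetP [x]]; rewrite inE => /andP [_ hxE] -> hs.
    by exists x => //; rewrite inE hxE andbT -sub1set.
  - move=> [x]; rewrite inE => /andP [hxA hxE] ->; split; last by rewrite sub1set.
    by apply/imsetP; exists x => //; rewrite inE hxE andbT (subsetP hA).
by rewrite card_imset //; apply: set1_inj.
Qed.

End Aux.
Arguments E1 {T}.
Arguments inj_gamma {T}.
Arguments E1_hyp {T}.
Arguments E1_gamma {T X E}.
Arguments rigid_all {T X E}.
Arguments gammaS {T}.

Theorem proposition4p16 (T : finType) :
  (* gamma(H) is a boolean function on X *)
  (forall (X : {set T}) (E : {set {set T}}), hypergraph X E ->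
     is_boolfun X (gamma E)) /\
  (* H |-> gamma(H) is injective *)
  (forall (X : {set T}) (E1 E2 : {set {set T}}),
     hypergraph X E1 -> hypergraph X E2 ->
     bf_eq X (gamma E1) (gamma E2) -> E1 = E2) /\
  (* gamma(H) is rigid *)
  (forall (X : {set T}) (E : {set {set T}}), hypergraph X E ->
     rigid X (gamma E)) /\
  (* gamma(GH) = gamma(G) *_1 gamma(H) *)
  (forall (X Y : {set T}) (G H : {set {set T}}),
     [disjoint X & Y] -> hypergraph X G -> hypergraph Y H ->
     hypergraph (X :|: Y) (G :|: H) /\
     bf_eq (X :|: Y) (gamma (G :|: H)) (star1 X Y (gamma G) (gamma H))) /\
  (* gamma(H_|X') = gamma(H)_|X' *)
  (forall (X X' : {set T}) (E : {set {set T}}),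
     hypergraph X E -> X' \subset X ->
     hypergraph X' (hrestrict E X') /\
     bf_eq X' (gamma (hrestrict E X')) (gamma E)) /\
  (* gamma(H) modular iff all hyperedges have cardinality 1 *)
  (forall (X : {set T}) (E : {set {set T}}), hypergraph X E ->
     (modular X (gamma E) <-> (forall e : {set T}, e \in E -> #|e| = 1%N))).
Proof.
split.
  move=> X E hE; rewrite /is_boolfun gammaS; congr Posz.
  apply/eqP; rewrite sum_nat_eq0; apply/forall_inP => e he.
  by rewrite eqb0 subset0; exact: (hE e he).1.
split; first exact: inj_gamma.
split.
  by move=> X E hE P _ Y _; exact: rigid_all hE Y.
split.
  move=> X Y G H hd hG hH; split.
    move=> e; rewrite inE => /orP [/hG [h1 h2]|/hH [h1 h2]]; split => //.
    - by apply: subset_trans h2 (subsetUl _ _).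
    - by apply: subset_trans h2 (subsetUr _ _).
  move=> A hA; rewrite /star1 !gammaS -PoszD; congr Posz.
  have hGH : [disjoint G & H].
    rewrite -setI_eq0; apply/eqP/setP => e; rewrite !inE.
    apply/negbTE/negP => /andP [/hG [hne hX] /hH [_ hY]].
    move/set0Pn: hne => [x hx].
    by have := disjointFr hd (subsetP hX x hx); rewrite (subsetP hY x hx).
  have -> : \sum_(e in G :|: H) (e \subset A : nat) =
            \sum_(e in [predU G & H]) (e \subset A : nat).
    by apply: eq_bigl => e; rewrite !inE.
  rewrite bigU //; congr (_ + _)%N; apply: eq_bigr => e he.
  - by rewrite subsetI (hG e he).2 andbT.
  - by rewrite subsetI (hH e he).2 andbT.
split.
  move=> X X' E hE hX'; split.
    by move=> e; rewrite inE => /andP [/hE [h _] h2].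
  move=> A hA; rewrite /gamma /hrestrict; congr Posz; apply: eq_card => e.
  rewrite !inE; case h: (e \subset A); rewrite ?andbF ?andbT //.
  by rewrite (subset_trans h hA) andbT.
move=> X E hE; split.
- move=> hm.
  have hEq : E = E1 X E.
    apply: (inj_gamma X E (E1 X E) hE (E1_hyp X E)) => A hA.
    by rewrite (E1_gamma hE A hA); apply: hm.
  move=> e; rewrite hEq => /imsetP [x _ ->]; exact: cards1.
- move=> h1.
  have hEq : E1 X E = E.
    apply/setP => e; apply/idP/idP.
    + by move=> /imsetP [x]; rewrite inE => /andP [_ ?] ->.
    + move=> he; have /eqP/cards1P [x hx] := h1 e he.
      apply/imsetP; exists x => //; rewrite inE -hx he andbT.
      by rewrite -sub1set -hx; exact: (hE e he).2.
  move=> A hA; by rewrite -(E1_gamma hE A hA) hEq.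
Qed.
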